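(* Let $C$ be a convex subset of a real separable Banach space $X$, and let $A,B$ be faces of $C$ with $\overline{A}\neq\overline{B}$. Then $\operatorname{fri} A\cap\operatorname{fri} B=\emptyset$.
   Context: For a convex set $C$, a convex subset $F\subseteq C$ is a face of $C$ if for every $x\in F$ and all $y,z\in C$ with $x\in(y,z)=\{(1-t)y+tz:t\in(0,1)\}$ we have $y,z\in F$; $F_{\min}(x,C)$ is the intersection of all faces of $C$ containing $x\in C$. The face relative interior of a convex set $D$ is $\operatorname{fri} D=\{x\in D: D\subseteq\overline{F_{\min}(x,D)}\}$. *)

(* Defs.v *)
From HB Require Import structures.
From mathcomp Require Import all_boot all_order all_algebra.
From mathcomp Require Import all_classical all_reals all_analysis.
Set Implicit Arguments. Unset Strict Implicit. Unset Printing Implicit Defensive.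
Import Order.TTheory GRing.Theory Num.Theory.
Import numFieldNormedType.Exports.
Local Open Scope classical_set_scope.
Local Open Scope ring_scope.

Definition separable_space (T : topologicalType) : Prop :=
  exists D : set T, countable D /\ dense D.

Section ConvexFaces.
Variables (R : realType) (X : lmodType R).

Definition convex (C : set X) : Prop :=
  forall y z (t : R), C y -> C z -> 0 <= t -> t <= 1 ->
    C ((1 - t) *: y + t *: z).

Definition is_face (C F : set X) : Prop :=
  [/\ F `<=` C, convex F &
   forall x y z, F x -> C y -> C z ->
     (exists t : R, [/\ 0 < t, t < 1 & x = (1 - t) *: y + t *: z]) ->
     F y /\ F z].

Definition Fmin (x : X) (C : set X) : set X :=
  \bigcap_(F in [set F | is_face C F /\ F x]) F.

End ConvexFaces.

Definition fri (R : realType) (X : normedModType R) (D : set X) : set X :=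
  [set x | D x /\ D `<=` closure (Fmin x D)].

(* Main.v *)
Require Import Defs.
From HB Require Import structures.
From mathcomp Require Import all_boot all_order all_algebra.
From mathcomp Require Import all_classical all_reals all_analysis.
Import numFieldNormedType.Exports.
Local Open Scope classical_set_scope.

Lemma half_incl (R : realType) (X : completeNormedModType R)
  (C A B : set X) x :
  is_face C A -> is_face C B -> fri A x -> fri B x ->
  closure A `<=` closure B.
Proof.
move=> [AC cA fA] [BC cB fB] [Ax HA] [Bx HB].
have sub : Fmin x A `<=` B.
  move=> y Hy.
  have : (A `&` B) y.
    apply: Hy; split; last by split.
    split.
    - by move=> z [].
    - move=> u v t [Au Bu] [Av Bv] t0 t1; split; [exact: cA | exact: cB].
    - move=> u v w [Au Bu] Av Aw ex.
      have [Bv Bw] := fB u v w Bu (AC _ Av) (AC _ Aw) ex.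
      by split; split.
  by case.
have AcB : A `<=` closure B.
  move=> a /HA; apply: closureS; exact: sub.
have -> : closure B = closure (closure B).
  by apply/closure_id; exact: closed_closure.
exact: closureS.
Qed.

Theorem proposition5p2 (R : realType) (X : completeNormedModType R)
  (C A B : set X) :
  separable_space X ->
  convex C -> is_face C A -> is_face C B ->
  closure A <> closure B ->
  fri A `&` fri B = set0.
Proof.
move=> _ _ fA fB ne; apply/seteqP; split => // x [Ha Hb].
apply: ne; apply/seteqP; split.
- exact: (@half_incl R X C A B x fA fB Ha Hb).
- exact: (@half_incl R X C B A x fB fA Hb Ha).
Qed.
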